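(* Let $n$ be sufficiently large, let $k \ge 4\log_2 n + 2$ be an integer, and let $T_k$ be any tournament on $k$ vertices. Then OBreaker has a winning strategy in the orientation game $Or(T_k,n)$.
   Context: A tournament is a directed graph in which every pair of distinct vertices is joined by exactly one directed edge. The orientation game $Or(T_k,n)$ is played on the edge set of $K_n$ by two players, OMaker and OBreaker. OMaker moves first, and the players then alternate. In each move the player chooses one previously undirected edge of $K_n$ and gives it a direction. The game ends when all edges are directed. OMaker wins if the final digraph, which contains the edges directed by both players, contains a copy of $T_k$; otherwise OBreaker wins. *)

(* Defs.v *)
From mathcomp Require Import all_boot.
Set Implicit Arguments. Unset Strict Implicit. Unset Printing Implicit Defensive.

Definition is_tournament (k : nat) (T : rel 'I_k) : Prop :=
  (forall i, ~~ T i i) /\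
  (forall i j, i != j -> (T i j || T j i) && ~~ (T i j && T j i)).

(* A (partial) orientation of K_n: D u v means the edge {u,v} was directed u -> v. *)
Definition legal_move (n : nat) (D : rel 'I_n) (u v : 'I_n) : bool :=
  [&& u != v, ~~ D u v & ~~ D v u].

Definition add_arc (n : nat) (D : rel 'I_n) (u v : 'I_n) : rel 'I_n :=
  fun x y => D x y || ((x == u) && (y == v)).

Definition all_directed (n : nat) (D : rel 'I_n) : Prop :=
  forall u v : 'I_n, u != v -> D u v || D v u.

Definition contains_copy (k n : nat) (T : rel 'I_k) (D : rel 'I_n) : Prop :=
  exists f : 'I_k -> 'I_n, injective f /\ forall i j, T i j -> D (f i) (f j).

Definition empty_orientation (n : nat) : rel 'I_n := fun _ _ => false.

(* OBreaker_wins T maker_to_move D : OBreaker has a winning strategy in the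
   orientation game Or(T,n) from position D, with OMaker to move iff
   maker_to_move. *)
Inductive OBreaker_wins (k n : nat) (T : rel 'I_k) : bool -> rel 'I_n -> Prop :=
| OBw_end : forall b D, all_directed D -> ~ contains_copy T D ->
    OBreaker_wins T b D
| OBw_maker : forall D, ~ all_directed D ->
    (forall u v, legal_move D u v -> OBreaker_wins T false (add_arc D u v)) ->
    OBreaker_wins T true D
| OBw_breaker : forall D, ~ all_directed D ->
    (exists u v, legal_move D u v /\ OBreaker_wins T true (add_arc D u v)) ->
    OBreaker_wins T false D.

Definition OBreaker_has_winning_strategy (k n : nat) (T : rel 'I_k) : Prop :=
  OBreaker_wins (n:=n) T true (@empty_orientation n).

(* Main.v *)
Require Import Defs.
From mathcomp Require Import all_boot all_order all_algebra.
From mathcomp Require Import realalg.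
From mathcomp.algebra_tactics Require Import ring lra.
From mathcomp Require Import zify.
Set Implicit Arguments. Unset Strict Implicit. Unset Printing Implicit Defensive.
Import Order.TTheory GRing.Theory Num.Theory.
Local Open Scope ring_scope.

Lemma ar_round (R : realFieldType) (lam w0 w1 w2 : R) (bB bB' bA : bool) :
  1 <= lam -> lam ^+ 2 = 2 -> 0 <= w0 -> 0 <= w1 ->
  (bB -> w1 = 0) -> w1 <= (if bB' then lam else 1) * w0 ->
  w2 <= (if bA then lam else 1) * w1 ->
  w2 <= w0 - (if bB then w0 else 0) + (lam ^+ 2 - lam) * (if bB' then w0 else 0)
        + (lam - 1) * (if bA then w0 else 0).
Proof.
move=> l1 l2 h0 h1 hB h2 h3.
have c1 : lam <= lam ^+ 2 by rewrite expr2 -{1}(mulr1 lam) ler_wpM2l // (le_trans _ l1).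
case: bB hB => [/(_ isT) e|_]; first by rewrite e mulr0 in h3; case: bA h3; case: bB' h2 => /= *; nra.
case: bA h3; case: bB' h2 => /= *; nra.
Qed.

Section Game.
Variables (k n : nat) (T : rel 'I_k).
Variable R : realFieldType.
Variable lam : R.
Hypothesis lam2 : lam ^+ 2 = 2.
Hypothesis lam1 : 1 <= lam.

Local Notation cop := {ffun 'I_k -> 'I_n}.

Definition uses (f : cop) (x y : 'I_n) : bool :=
  [exists p : 'I_k * 'I_k, [&& T p.1 p.2, f p.1 == x & f p.2 == y]].
Definition alive (D : rel 'I_n) (f : cop) : bool :=
  [forall p : 'I_k * 'I_k, T p.1 p.2 ==> ~~ D (f p.2) (f p.1)].
Definition cnt (D : rel 'I_n) (f : cop) : nat :=
  #|[set p : 'I_k * 'I_k | T p.1 p.2 && D (f p.1) (f p.2)]|.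
Definition wt D f : R := if alive D f then lam ^+ cnt D f else 0.
Definition Phi D : R := \sum_(f : cop | injectiveb f) wt D f.
Definition gw D x y : R := \sum_(f : cop | injectiveb f && uses f x y) wt D f.

Lemma lam0 : 0 <= lam. Proof. exact: le_trans lam1. Qed.

Lemma wt_ge0 D f : 0 <= wt D f.
Proof. rewrite /wt; case: ifP => // _; exact: exprn_ge0 lam0. Qed.

Lemma alive_mono D x y f : alive (add_arc D x y) f -> alive D f.
Proof.
move/forallP=> H; apply/forallP=> p; apply/implyP=> Tp.
by have := implyP (H p) Tp; rewrite /add_arc negb_or => /andP[].
Qed.

Lemma cnt_le D x y (f : cop) : injective f ->
  (cnt (add_arc D x y) f <= cnt D f + uses f x y)%N.
Proof.
move=> finj; rewrite /cnt.
set A := [set p : 'I_k * 'I_k | T p.1 p.2 && D (f p.1) (f p.2)].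
set B := [set p : 'I_k * 'I_k | [&& T p.1 p.2, f p.1 == x & f p.2 == y]].
apply: (@leq_trans #|A :|: B|).
  apply: subset_leq_card. apply/subsetP=> p; rewrite !inE /add_arc.
  by case: (T _ _) => //=; case: (D _ _).
apply: (leq_trans (leq_card_setU A B)); rewrite leq_add2l.
case: (boolP (uses f x y)) => [/existsP[p0 Hp0]|Hn].
  apply: (@leq_trans #|[set p0]|); last by rewrite cards1.
  apply: subset_leq_card.
  apply/subsetP=> p; rewrite !inE => /and3P[_ /eqP e1 /eqP e2].
  case/and3P: Hp0 => _ /eqP f1 /eqP f2.
  have ea : p.1 = p0.1 by apply: finj; rewrite e1 f1.
  have eb : p.2 = p0.2 by apply: finj; rewrite e2 f2.
  by case: p p0 ea eb {e1 e2 f1 f2} => a b [a0 b0] /= -> ->.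
rewrite leqn0 cards_eq0; apply/eqP/setP=> p; rewrite !inE.
by apply/negP=> Hp; case/negP: Hn; apply/existsP; exists p.
Qed.

Lemma wt_step D x y (f : cop) : injective f ->
  wt (add_arc D x y) f <= (if uses f x y then lam else 1) * wt D f.
Proof.
move=> finj; rewrite /wt; case: ifP => Ha; last first.
  by case: ifP => _; rewrite ?mul1r ?mulr_ge0 ?lam0 //; case: ifP => // _; exact: exprn_ge0 lam0.
rewrite (alive_mono Ha); have := cnt_le D x y finj.
case: (uses f x y) => /= h.
  by rewrite -exprS; apply: ler_weXn2l => //; rewrite -addn1.
by rewrite mul1r; apply: ler_weXn2l => //; rewrite addn0 in h.
Qed.

Lemma wt_kill D x y (f : cop) : uses f y x -> wt (add_arc D x y) f = 0.
Proof.
case/existsP=> p /and3P[Tp /eqP e1 /eqP e2]; rewrite /wt; case: ifP => // /forallP H.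
by have := implyP (H p) Tp; rewrite e1 e2 /add_arc !eqxx orbT.
Qed.


Lemma gwE (D : rel 'I_n) x y : gw D x y = \sum_(f : cop | injectiveb f) (if uses f x y then wt D f else 0).
Proof. by rewrite /gw big_mkcondr. Qed.

Lemma legal_sym (D : rel 'I_n) x y : legal_move D x y -> legal_move D y x.
Proof. by case/and3P=> a b c; apply/and3P; split; rewrite // eq_sym. Qed.

Lemma legal_mono (D : rel 'I_n) x y u v : legal_move (add_arc D x y) u v -> legal_move D u v.
Proof. by rewrite /legal_move /add_arc !negb_or => /and3P[-> /andP[-> _] /andP[-> _]]. Qed.

Lemma breaker_one (D : rel 'I_n) b1 b2 :
  legal_move D b1 b2 ->
  (forall x y, legal_move D x y -> gw D x y <= gw D b1 b2) ->
  Phi (add_arc D b2 b1) <= Phi D.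
Proof.
move=> Hl Hmax; have l1 := lam1; have l2' := lam2; have H1 := Hmax _ _ (legal_sym Hl).
apply: (@le_trans _ _ (Phi D - gw D b1 b2 + (lam - 1) * gw D b2 b1)); last first.
  have g0 : 0 <= gw D b2 b1 by apply: sumr_ge0 => f _; exact: wt_ge0.
  have l2 : lam <= 2.
    by have := ler_wpM2l lam0 lam1; rewrite mulr1 -expr2 lam2.
  nra.
rewrite !gwE /Phi mulr_sumr -sumrB -big_split /=; apply: ler_sum => f /injectiveP finj.
have w0 := wt_ge0 D f; case: (boolP (uses f b1 b2)) => hB.
  rewrite wt_kill //; case: ifP => _; nra.
have := wt_step D b2 b1 finj; case: ifP => _ h; nra.
Qed.

Lemma breaker_round (D : rel 'I_n) b1 b2 a1 a2 :
  legal_move D b1 b2 ->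
  (forall x y, legal_move D x y -> gw D x y <= gw D b1 b2) ->
  legal_move D a1 a2 ->
  Phi (add_arc (add_arc D b2 b1) a1 a2) <= Phi D.
Proof.
move=> Hl Hmax HA; have l1 := lam1; have l2' := lam2;
have c1 : 0 <= lam ^+ 2 - lam by rewrite lam2; have := ler_wpM2l lam0 lam1; rewrite mulr1 -expr2 lam2 subr_ge0.
have c2 : 0 <= lam - 1 by rewrite subr_ge0. have H1 := Hmax _ _ (legal_sym Hl); have H2 := Hmax _ _ HA.
have g1 : 0 <= gw D b2 b1 by apply: sumr_ge0 => f _; exact: wt_ge0.
have g2 : 0 <= gw D a1 a2 by apply: sumr_ge0 => f _; exact: wt_ge0.
apply: (@le_trans _ _ (Phi D - gw D b1 b2 + (lam ^+ 2 - lam) * gw D b2 b1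
   + (lam - 1) * gw D a1 a2)); last by rewrite lam2; nra.
rewrite !gwE /Phi !mulr_sumr -sumrB -!big_split /=; apply: ler_sum => f /injectiveP finj.
apply: (@ar_round _ lam _ (wt (add_arc D b2 b1) f)) => //; try exact: wt_ge0.
- by move=> hB; rewrite (@wt_kill D b2 b1 f hB).
- exact: wt_step.
- exact: wt_step.
Qed.

Lemma maker_first (D : rel 'I_n) x y : Phi (add_arc D x y) <= lam * Phi D.
Proof.
have l1 := lam1; rewrite /Phi mulr_sumr; apply: ler_sum => f /injectiveP finj.
have w0 := wt_ge0 D f; have := wt_step D x y finj; case: ifP => _ h; nra.
Qed.

Definition antisym (D : rel 'I_n) := forall u v, D u v -> ~~ D v u.
Definition undir (D : rel 'I_n) := #|[set p : 'I_n * 'I_n | ~~ D p.1 p.2]|.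

Lemma undir_lt (D : rel 'I_n) x y : legal_move D x y -> (undir (add_arc D x y) < undir D)%N.
Proof.
case/and3P=> hxy hD1 hD2; apply: proper_card; apply/properP; split.
  by apply/subsetP=> p; rewrite !inE /add_arc negb_or => /andP[].
by exists (x,y); rewrite !inE /add_arc ?hD1 // !eqxx orbT.
Qed.

Lemma antisym_add (D : rel 'I_n) x y : antisym D -> legal_move D x y -> antisym (add_arc D x y).
Proof.
move=> HA /and3P[hxy hD1 hD2] u v; rewrite /add_arc negb_or.
case/orP=> [Duv|/andP[/eqP eu /eqP ev]].
  rewrite (HA _ _ Duv) /=; apply/negP=> /andP[/eqP ev /eqP eu]; subst.
  by rewrite Duv in hD2.
subst; rewrite (negbTE hD2) /=; apply/negP=> /andP[/eqP e _].
by rewrite e eqxx in hxy.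
Qed.

Lemma copy_big (D : rel 'I_n) : antisym D -> contains_copy T D ->
  lam ^+ #|[set p : 'I_k * 'I_k | T p.1 p.2]| <= Phi D.
Proof.
move=> HA [f [finj Hf]].
pose ff : cop := finfun f.
have ffE : forall i, ff i = f i by move=> i; rewrite ffunE.
have inj : injectiveb ff by apply/injectiveP=> i j; rewrite !ffE; exact: finj.
have -> : lam ^+ #|[set p : 'I_k * 'I_k | T p.1 p.2]| = wt D ff.
  rewrite /wt; have -> : alive D ff.
    by apply/forallP=> p; apply/implyP=> Tp; rewrite !ffE; exact: HA (Hf _ _ Tp).
  congr (_ ^+ _); rewrite /cnt; apply: eq_card => p; rewrite !inE !ffE.
  by case: (boolP (T p.1 p.2)) => //= Tp; rewrite Hf.
rewrite /Phi (bigD1 ff) //= lerDl; apply: sumr_ge0 => g _; exact: wt_ge0.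
Qed.

Lemma all_dir_of (D : rel 'I_n) :
  ~~ [exists p : 'I_n * 'I_n, legal_move D p.1 p.2] -> all_directed D.
Proof.
move=> H u v huv; apply: contraNT H => h; apply/existsP; exists (u,v).
by rewrite /legal_move huv /=; rewrite negb_or in h.
Qed.

Lemma not_all_dir (D : rel 'I_n) (p : 'I_n * 'I_n) : legal_move D p.1 p.2 -> ~ all_directed D.
Proof.
case: p => u v /and3P[h1 h2 h3] H; have := H _ _ h1.
by rewrite (negbTE h2) (negbTE h3).
Qed.

Variable C : R.
Hypothesis HC : C < lam ^+ #|[set p : 'I_k * 'I_k | T p.1 p.2]|.

Lemma no_copy (D : rel 'I_n) : antisym D -> Phi D <= C -> ~ contains_copy T D.
Proof.
move=> HA HP Hc; have := le_lt_trans (le_trans (copy_big HA Hc) HP) HC.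
by rewrite ltxx.
Qed.

Lemma breaker_wins m : forall D : rel 'I_n, (undir D < m)%N -> antisym D -> Phi D <= C ->
  OBreaker_wins T false D.
Proof.
elim: m => [//|m IH] D Hm HA HP.
case: (boolP [exists p : 'I_n * 'I_n, legal_move D p.1 p.2]) => [/existsP[p0 Hp0]|Hn]; last first.
  by apply: OBw_end; [exact: all_dir_of | exact: no_copy].
apply: OBw_breaker; first exact: not_all_dir Hp0.
case: (@arg_maxP _ _ _ p0 (fun p : 'I_n * 'I_n => legal_move D p.1 p.2) (fun p : 'I_n * 'I_n => gw D p.1 p.2) Hp0) => [[b1 b2]] /= HB Hmax.
exists b2, b1; split; first exact: legal_sym.
set D1 := add_arc D b2 b1.
have HA1 : antisym D1 by apply: antisym_add => //; exact: legal_sym.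
have HP1 : Phi D1 <= Phi D by apply: breaker_one => // x y hl; exact: (Hmax (x,y)).
case: (boolP [exists p : 'I_n * 'I_n, legal_move D1 p.1 p.2]) => [/existsP[q0 Hq0]|Hn]; last first.
  by apply: OBw_end; [exact: all_dir_of | apply: no_copy => //; exact: le_trans HP].
apply: OBw_maker; first exact: not_all_dir Hq0.
move=> a1 a2 hA; apply: IH.
- have h1 := undir_lt hA; have h2 := undir_lt (legal_sym HB); rewrite -/D1 in h2.
  lia.
- exact: antisym_add.
- apply: le_trans HP; apply: breaker_round => //; last exact: legal_mono hA.
  by move=> x y hl; exact: (Hmax (x,y)).
Qed.

End Game.

Definition sw (k : nat) (p : 'I_k * 'I_k) : 'I_k * 'I_k := (p.2, p.1).
Lemma swK k : cancel (@sw k) (@sw k). Proof. by case. Qed.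

Lemma count_arcs k (T : rel 'I_k) : is_tournament T ->
  (k * k - k <= 2 * #|[set p : 'I_k * 'I_k | T p.1 p.2]|)%N.
Proof.
case=> _ HT.
have Esw : #|[set p : 'I_k * 'I_k | T p.2 p.1]| = #|[set p : 'I_k * 'I_k | T p.1 p.2]|.
  have -> : [set p : 'I_k * 'I_k | T p.2 p.1] = (@sw k) @^-1: [set p : 'I_k * 'I_k | T p.1 p.2].
    by apply/setP=> p; rewrite !inE.
  by rewrite -(can2_imset_pre _ (@swK k) (@swK k)) card_imset //; exact: can_inj (@swK k).
have Hne : (#|[set p : 'I_k * 'I_k | p.1 != p.2]| <=
    #|[set p : 'I_k * 'I_k | T p.1 p.2]| + #|[set p : 'I_k * 'I_k | T p.2 p.1]|)%N.
  apply: leq_trans (leq_card_setU _ _); apply: subset_leq_card; apply/subsetP => p.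
  by rewrite !inE => hp; case/andP: (HT _ _ hp).
have Heq : (#|[set p : 'I_k * 'I_k | p.1 == p.2]| <= k)%N.
  apply: (@leq_trans #|(fun i : 'I_k => (i, i)) @: [set: 'I_k]|).
    apply: subset_leq_card; apply/subsetP => p; rewrite inE => hp.
    apply/imsetP; exists p.1; rewrite ?inE //; case: p hp => a b /= /eqP ->.
    by [].
  by apply: (leq_trans (leq_imset_card _ _)); rewrite cardsT card_ord.
have Htot : (#|[set p : 'I_k * 'I_k | p.1 != p.2]| + #|[set p : 'I_k * 'I_k | p.1 == p.2]|
   = k * k)%N.
  have -> : [set p : 'I_k * 'I_k | p.1 != p.2] = ~: [set p : 'I_k * 'I_k | p.1 == p.2].
    by apply/setP=> p; rewrite !inE.
  by rewrite addnC cardsC card_prod card_ord.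
rewrite Esw in Hne; lia.
Qed.

Lemma final_ineq (R : realFieldType) (lam : R) (n k M : nat) :
  lam ^+ 2 = 2 -> 0 <= lam -> (2 <= n)%N -> (n ^ 4 <= 2 ^ (k - 2))%N ->
  (k * k - k <= 2 * M)%N -> lam * (n ^ k)%:R < lam ^+ M.
Proof.
move=> l2 l0 Hn Hnk HM.
have Hk : (2 < k)%N.
  rewrite ltnNge; apply/negP=> hk; have e : (k - 2 = 0)%N by lia.
  rewrite e expn0 in Hnk; have : (2 ^ 4 <= n ^ 4)%N by rewrite leq_exp2r.
  move: (n ^ 4)%N Hnk => m; rewrite (_ : 2 ^ 4 = 16)%N //; lia.
have Hnat : (2 * n ^ (2 * k) < 2 ^ M)%N.
  rewrite -ltn_sqr.
  apply: (@leq_ltn_trans (2 ^ (2 + (k - 2) * k))).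
    have a1 : ((2 * n ^ (2 * k)) ^ 2 = 2 ^ 2 * (n ^ 4) ^ k)%N.
      by rewrite expnMn -!expnM; congr (_ * (n ^ _))%N; lia.
    have a2 : ((n ^ 4) ^ k <= (2 ^ (k - 2)) ^ k)%N by rewrite leq_exp2r //; lia.
    have a3 : (2 ^ (2 + (k - 2) * k) = 2 ^ 2 * (2 ^ (k - 2)) ^ k)%N by rewrite expnD -expnM.
    by rewrite a1 a3 leq_mul2l a2 orbT.
  rewrite -expnM ltn_exp2l //.
  have e : ((k - 2) * k = k * k - 2 * k)%N by rewrite mulnBl.
  rewrite e; nia.
have HR : (2 * n ^ (2 * k))%:R < (2 ^ M)%:R :> R by rewrite ltr_nat.
have e1 : (lam * (n ^ k)%:R) ^+ 2 = (2 * n ^ (2 * k))%:R.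
  by rewrite exprMn l2 natrM -natrX -expnM mulnC.
have e2 : (lam ^+ M) ^+ 2 = (2 ^ M)%:R.
  by rewrite -exprM mulnC exprM l2 natrX.
rewrite -e1 -e2 in HR.
have c0 : 0 <= lam * (n ^ k)%:R by rewrite mulr_ge0.
have c1 : 0 <= lam ^+ M by rewrite exprn_ge0.
move: HR c0 c1; move: (lam * _) (lam ^+ M) => a b HR c0 c1; nra.
Qed.

Local Close Scope ring_scope.

Theorem theorem3 : exists N : nat, forall n k : nat, N <= n ->
  2 <= k -> n ^ 4 <= 2 ^ (k - 2) ->
  forall T : rel 'I_k, is_tournament T ->
  OBreaker_has_winning_strategy n T.
Proof.
exists 2%N => n k Hn Hk Hnk T HT.
pose lam : realalg := Num.sqrt 2.
have l2 : (lam ^+ 2 = 2)%R by rewrite sqr_sqrtr.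
have l0 : (0 <= lam)%R by rewrite sqrtr_ge0.
have l1 : (1 <= lam)%R by nra.
have HC := final_ineq l2 l0 Hn Hnk (count_arcs HT).
have Hn0 : (0 < n)%N by lia.
have Hn1 : (1 < n)%N by lia.
apply: OBw_maker.
  exact: (@not_all_dir n (@empty_orientation n) (Ordinal Hn0, Ordinal Hn1)).
move=> x y hl.
apply: (@breaker_wins k n T _ lam l2 l1 _ HC (undir (add_arc (@empty_orientation n) x y)).+1) => //.
  apply: antisym_add => //.
apply: (le_trans (maker_first T l1 _ _ _)); rewrite ler_wpM2l //.
rewrite /Phi; apply: (@le_trans _ _ (\sum_(f : {ffun 'I_k -> 'I_n}) (1 : realalg))%R).
  rewrite big_mkcond /=; apply: ler_sum => f _; case: ifP => _ //.
  rewrite /wt; case: ifP => // _.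
  rewrite /cnt (_ : #|_| = 0%N) ?expr0 //; apply/eqP; rewrite cards_eq0; apply/eqP/setP => p.
  by rewrite !inE andbF.
by rewrite sumr_const card_ffun !card_ord.
Qed.
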